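(* Let $\alpha\in(0,2]$. For integers $n_1,n_2\ge 1$, with $n=n_1+n_2$, define $$f_{\{n_1\}\{n_2\}}=\max_{|\phi_a\rangle,|\phi_b\rangle}\ \operatorname{Tr}\Big[\big(\alpha\mathcal{M}^{(n)}_Z+\mathcal{M}^{(n)}_X\big)\,|\phi_a\rangle\langle\phi_a|\otimes|\phi_b\rangle\langle\phi_b|\Big],$$ where the maximum is over unit vectors $|\phi_a\rangle\in(\mathbb{C}^2)^{\otimes n_1}$ and $|\phi_b\rangle\in(\mathbb{C}^2)^{\otimes n_2}$, and $\mathcal{M}^{(n)}_Z=(|0\rangle\langle 0|)^{\otimes n}+(|1\rangle\langle 1|)^{\otimes n}$, $\mathcal{M}^{(n)}_X=\sigma_x^{\otimes n}$ with $\sigma_x=|0\rangle\langle 1|+|1\rangle\langle 0|$. Then for all $n_1,n_2\ge 1$, $$f_{\{n_1\}\{n_2\}}=f_{\{n_1\}\{1\}}.$$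
   Context: $\{|0\rangle,|1\rangle\}$ is the computational basis of $\mathbb{C}^2$; $f_{\{n_1\}\{1\}}$ is the same quantity defined with $n_2=1$ (so on $n_1+1$ qubits). *)

(* Defs.v *)
From HB Require Import structures.
From mathcomp Require Import all_boot all_order all_algebra.
From mathcomp Require Import complex mxtens.
From mathcomp Require Import classical_sets reals.

Set Implicit Arguments.
Unset Strict Implicit.
Unset Printing Implicit Defensive.

Import Order.TTheory GRing.Theory Num.Theory.
Local Open Scope ring_scope.
Local Open Scope complex_scope.

Section Qubits.
Variable R : realType.
Local Notation C := (R[i]).

Definition ket0 : 'I_2 := ord0.
Definition ket1 : 'I_2 := ord_max.

Definition proj0 : 'M[C]_2 := delta_mx ket0 ket0.
Definition proj1 : 'M[C]_2 := delta_mx ket1 ket1.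
Definition sigma_x : 'M[C]_2 := delta_mx ket0 ket1 + delta_mx ket1 ket0.

Fixpoint tpow (A : 'M[C]_2) (n : nat) : 'M[C]_(2 ^ n) :=
  match n return 'M[C]_(2 ^ n) with
  | 0 => castmx (esym (expn0 2), esym (expn0 2)) (1%:M : 'M[C]_1)
  | n'.+1 => castmx (esym (expnS 2 n'), esym (expnS 2 n')) (A *t tpow A n')
  end.

Definition MZ (n : nat) : 'M[C]_(2 ^ n) := tpow proj0 n + tpow proj1 n.
Definition MX (n : nat) : 'M[C]_(2 ^ n) := tpow sigma_x n.

Definition adj {m n : nat} (A : 'M[C]_(m, n)) : 'M[C]_(n, m) :=
  (map_mx (@conjc R) A)^T.

Definition unit_vec {m : nat} (v : 'cV[C]_m) : Prop := adj v *m v = 1%:M.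

Lemma expnD_2 (n1 n2 : nat) : (2 ^ (n1 + n2) = 2 ^ n1 * 2 ^ n2)%N.
Proof. exact: expnD. Qed.

(* Tr[(alpha M_Z^(n) + M_X^(n)) |a><a| (x) |b><b|], n = n1 + n2,
   with (C^2)^{(x)(n1+n2)} identified with (C^2)^{(x)n1} (x) (C^2)^{(x)n2} *)
Definition objective (alpha : R) (n1 n2 : nat)
    (a : 'cV[C]_(2 ^ n1)) (b : 'cV[C]_(2 ^ n2)) : C :=
  \tr (castmx (expnD_2 n1 n2, expnD_2 n1 n2)
             (alpha%:C *: MZ (n1 + n2) + MX (n1 + n2))
       *m ((a *m adj a) *t (b *m adj b))).

(* f_{{n1}{n2}}: the maximum (here: supremum, which is attained by
   compactness) over unit vectors of the (real) objective value *)
Definition f (alpha : R) (n1 n2 : nat) : R :=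
  sup [set x : R | exists (a : 'cV[C]_(2 ^ n1)) (b : 'cV[C]_(2 ^ n2)),
         unit_vec a /\ unit_vec b /\ (x%:C = objective alpha a b)].

End Qubits.

(* Main.v *)
Require Import Defs.
From HB Require Import structures.
From mathcomp Require Import all_boot all_order all_algebra.
From mathcomp Require Import complex mxtens.
From mathcomp Require Import classical_sets reals.
From mathcomp Require Import zify ring lra.
Import Order.TTheory GRing.Theory Num.Theory.
Set Implicit Arguments.
Unset Strict Implicit.
Unset Printing Implicit Defensive.


Lemma pred_mul N1 N2 : (0 < N1)%N -> (0 < N2)%N -> (N1 * N2).-1 = N1.-1 * N2 + N2.-1.
Proof. case: N1 => // n1; case: N2 => // n2 _ _. rewrite mulSn mulnS /=. lia. Qed.

Lemma idx_last N1 N2 a b : (a < N1)%N -> (b < N2)%N ->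
  (a * N2 + b == (N1 * N2).-1) = (a == N1.-1) && (b == N2.-1).
Proof.
move=> ha hb; rewrite pred_mul; [|lia|lia].
by rewrite eq_addl_mul ?xpair_eqE //; lia.
Qed.

Lemma idx_sig N1 N2 a1 a2 b1 b2 : (a1 < N1)%N -> (b1 < N1)%N -> (a2 < N2)%N -> (b2 < N2)%N ->
  (a1 * N2 + a2 + (b1 * N2 + b2) == (N1 * N2).-1) = (a1 + b1 == N1.-1) && (a2 + b2 == N2.-1).
Proof.
move=> h1 h2 h3 h4; rewrite pred_mul; [|lia|lia].
have -> : (a1 * N2 + a2 + (b1 * N2 + b2) = (a1 + b1) * N2 + (a2 + b2))%N by rewrite mulnDl; lia.
case: (ltnP (a2 + b2) N2) => h.
  by rewrite eq_addl_mul ?xpair_eqE //; lia.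
have -> : ((a1 + b1) * N2 + (a2 + b2) = (a1 + b1).+1 * N2 + (a2 + b2 - N2))%N by rewrite mulSn; lia.
rewrite eq_addl_mul; [|lia|lia].
have -> : (a2 + b2 == N2.-1) = false by lia.
rewrite xpair_eqE andbF; apply/negbTE; lia.
Qed.

Lemma exp2_gt0 n : (0 < 2 ^ n)%N. Proof. by rewrite expn_gt0. Qed.

Local Open Scope ring_scope.

Lemma tpowS_entry (R : realType) (A : 'M[R[i]]_2) n (P : nat -> nat -> bool) :
  (forall k l : 'I_(2 * 2 ^ n), (A *t tpow A n) k l = (P k l)%:R) ->
  forall i j : 'I_(2 ^ n.+1), tpow A n.+1 i j = (P i j)%:R.
Proof. by move=> H i j; rewrite /= castmxE H. Qed.

Lemma tpow0_entry (R : realType) (A : 'M[R[i]]_2) (i j : 'I_(2 ^ 0)) :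
  tpow A 0 i j = 1.
Proof.
rewrite /= castmxE mxE.
by case: i j => [[|//] ?] [[|//] ?] /=.
Qed.

Ltac boolnat := do ![case: eqP => /= ?]; lia.

Lemma tpow_proj1 (R : realType) n (i j : 'I_(2 ^ n)) :
  tpow (proj1 R) n i j = ((i == (2 ^ n).-1 :> nat) && (j == (2 ^ n).-1 :> nat))%:R.
Proof.
elim: n i j => [|n IH] i j.
  rewrite tpow0_entry; case: i j => [[|//] ?] [[|//] ?] //.
apply: (tpowS_entry (P := fun x y => (x == (2 ^ n.+1).-1) && (y == (2 ^ n.+1).-1))) => k l.
case: (mxtens_indexP k) => i1 i2; case: (mxtens_indexP l) => j1 j2.
rewrite tensmxE IH !mxE /= -natrM; congr (_ %:R).
have := ltn_ord i2; have := ltn_ord j2; have : (0 < 2 ^ n)%N by rewrite expn_gt0.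
rewrite expnS.
move: (2 ^ n)%N (nat_of_ord i2) (nat_of_ord j2) => N a b.
case: i1 j1 => [[|[|//]] ?] [[|[|//]] ?] /=; boolnat.
Qed.

Lemma tpow_sigma (R : realType) n (i j : 'I_(2 ^ n)) :
  tpow (sigma_x R) n i j = ((i + j)%N == (2 ^ n).-1 :> nat)%:R.
Proof.
elim: n i j => [|n IH] i j.
  rewrite tpow0_entry; case: i j => [[|//] ?] [[|//] ?] //.
apply: (tpowS_entry (P := fun x y => ((x + y)%N == (2 ^ n.+1).-1))) => k l.
case: (mxtens_indexP k) => i1 i2; case: (mxtens_indexP l) => j1 j2.
rewrite tensmxE IH !mxE /= -natrD -natrM; congr (_ %:R).
have := ltn_ord i2; have := ltn_ord j2; have : (0 < 2 ^ n)%N by rewrite expn_gt0.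
rewrite expnS.
move: (2 ^ n)%N (nat_of_ord i2) (nat_of_ord j2) => N a b.
case: i1 j1 => [[|[|//]] ?] [[|[|//]] ?] /=; boolnat.
Qed.
Lemma tpow_proj0 (R : realType) n (i j : 'I_(2 ^ n)) :
  tpow (proj0 R) n i j = ((i == 0%N :> nat) && (j == 0%N :> nat))%:R.
Proof.
elim: n i j => [|n IH] i j.
  rewrite tpow0_entry; case: i j => [[|//] ?] [[|//] ?] //.
apply: (tpowS_entry (P := fun x y => (x == 0%N) && (y == 0%N))) => k l.
case: (mxtens_indexP k) => i1 i2; case: (mxtens_indexP l) => j1 j2.
rewrite tensmxE IH !mxE /= -natrM; congr (_ %:R).
have := ltn_ord i2; have := ltn_ord j2; have : (0 < 2 ^ n)%N by rewrite expn_gt0.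
idtac.
move: (2 ^ n)%N (nat_of_ord i2) (nat_of_ord j2) => N a b.
case: i1 j1 => [[|[|//]] ?] [[|[|//]] ?] /=; boolnat.
Qed.

Lemma tpowD_proj0 (R : realType) n1 n2 :
  castmx (expnD_2 n1 n2, expnD_2 n1 n2) (tpow (proj0 R) (n1 + n2))
  = tpow (proj0 R) n1 *t tpow (proj0 R) n2.
Proof.
apply/matrixP => k l; rewrite castmxE.
case: (mxtens_indexP k) => i1 i2; case: (mxtens_indexP l) => j1 j2.
rewrite tensmxE !tpow_proj0 /= -natrM; congr (_ %:R).
rewrite !addn_eq0 !muln_eq0 !expn_eq0 /= !orbF.
by rewrite -mulnb; case: (nat_of_ord i1 == 0%N); case: (nat_of_ord i2 == 0%N); case: (nat_of_ord j1 == 0%N); case: (nat_of_ord j2 == 0%N).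
Qed.

Lemma tpowD_proj1 (R : realType) n1 n2 :
  castmx (expnD_2 n1 n2, expnD_2 n1 n2) (tpow (proj1 R) (n1 + n2))
  = tpow (proj1 R) n1 *t tpow (proj1 R) n2.
Proof.
apply/matrixP => k l; rewrite castmxE.
case: (mxtens_indexP k) => i1 i2; case: (mxtens_indexP l) => j1 j2.
rewrite tensmxE !tpow_proj1 /= -natrM expnD; congr (_ %:R).
rewrite !idx_last //.
by rewrite -mulnb; case: (nat_of_ord i1 == _); case: (nat_of_ord i2 == _); case: (nat_of_ord j1 == _); case: (nat_of_ord j2 == _).
Qed.

Lemma tpowD_sigma (R : realType) n1 n2 :
  castmx (expnD_2 n1 n2, expnD_2 n1 n2) (tpow (sigma_x R) (n1 + n2))
  = tpow (sigma_x R) n1 *t tpow (sigma_x R) n2.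
Proof.
apply/matrixP => k l; rewrite castmxE.
case: (mxtens_indexP k) => i1 i2; case: (mxtens_indexP l) => j1 j2.
rewrite tensmxE !tpow_sigma /= -natrM expnD; congr (_ %:R).
by rewrite idx_sig // mulnb.
Qed.

Local Open Scope complex_scope.

Local Open Scope ring_scope.
Local Open Scope complex_scope.

Lemma trace_tens (R : comPzRingType) m n (A : 'M[R]_m) (B : 'M[R]_n) :
  \tr (A *t B) = \tr A * \tr B.
Proof.
rewrite /mxtrace mulr_sum; apply: eq_bigr => k _; by rewrite mxE.
Qed.

Lemma tr_rank1 (R : realType) N (P : 'M[R[i]]_N) (v : 'cV[R[i]]_N) :
  \tr (P *m (v *m adj v)) = \sum_i \sum_j P i j * (v j 0 * (v i 0)^*).
Proof.
rewrite /mxtrace; apply: eq_bigr => i _; rewrite mxE; apply: eq_bigr => j _.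
by rewrite !mxE big_ord1 !mxE.
Qed.


Lemma sum2_delta (T : pzSemiRingType) N (a b : 'I_N) (F : 'I_N -> 'I_N -> T) :
  \sum_i \sum_j (((i == a) && (j == b))%:R : T) * F i j = F a b.
Proof.
rewrite (bigD1 a) //= [X in _ + X]big1 ?addr0; last first.
  by move=> i /negbTE hi; apply: big1 => j _; rewrite hi mul0r.
rewrite (bigD1 b) //= [X in _ + X]big1 ?addr0; last by move=> j /negbTE hj; rewrite hj andbF mul0r.
by rewrite !eqxx mul1r.
Qed.


Definition i0 n : 'I_(2 ^ n) := Ordinal (exp2_gt0 n).
Definition il n : 'I_(2 ^ n) := rev_ord (i0 n).
Definition n2c (R : realType) (z : R[i]) : R := complex.Re z ^+ 2 + complex.Im z ^+ 2.

Lemma mulcJ (R : realType) (z : R[i]) : z * z^* = (n2c z)%:C.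
Proof. case: z => a b; rewrite /n2c /=; simpc. by apply/eqP; rewrite eq_complex /=; apply/andP; split; apply/eqP; ring. Qed.

Lemma sum1_delta (T : pzSemiRingType) N (b : 'I_N) (F : 'I_N -> T) :
  \sum_j ((j == b)%:R : T) * F j = F b.
Proof.
rewrite (bigD1 b) //= big1 ?addr0; last by move=> j /negbTE hj; rewrite hj mul0r.
by rewrite eqxx mul1r.
Qed.

Lemma trP0 (R : realType) n (v : 'cV[R[i]]_(2 ^ n)) :
  \tr (tpow (proj0 R) n *m (v *m adj v)) = (n2c (v (i0 n) 0))%:C.
Proof.
rewrite tr_rank1 -mulcJ.
under eq_bigr do under eq_bigr do rewrite tpow_proj0.
exact: (sum2_delta (i0 n) (i0 n) (fun i j => v j 0 * (v i 0)^*)).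
Qed.

Lemma trP1 (R : realType) n (v : 'cV[R[i]]_(2 ^ n)) :
  \tr (tpow (proj1 R) n *m (v *m adj v)) = (n2c (v (il n) 0))%:C.
Proof.
rewrite tr_rank1 -mulcJ.
have E : forall i : 'I_(2 ^ n), (nat_of_ord i == (2 ^ n).-1) = (i == il n).
  by move=> i; rewrite -val_eqE /= subn1.
under eq_bigr do under eq_bigr do rewrite tpow_proj1 !E.
exact: (sum2_delta (il n) (il n) (fun i j => v j 0 * (v i 0)^*)).
Qed.

Definition Xv (R : realType) N (v : 'cV[R[i]]_N) : R :=
  \sum_i complex.Re (v (rev_ord i) 0 * (v i 0)^*).

Lemma Re_sum (R : realType) I (r : seq I) (P : pred I) (F : I -> R[i]) :
  complex.Re (\sum_(i <- r | P i) F i) = \sum_(i <- r | P i) complex.Re (F i).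
Proof. by apply: (big_morph _ (fun x y => _) (erefl _)) => -[? ?] [? ?]. Qed.

Lemma Im_sum (R : realType) I (r : seq I) (P : pred I) (F : I -> R[i]) :
  complex.Im (\sum_(i <- r | P i) F i) = \sum_(i <- r | P i) complex.Im (F i).
Proof. by apply: (big_morph _ (fun x y => _) (erefl _)) => -[? ?] [? ?]. Qed.

Lemma Im_swap (R : realType) (x y : R[i]) : complex.Im (x * y^*) = - complex.Im (y * x^*).
Proof. by case: x y => a b [c d] /=; ring. Qed.

Lemma trX (R : realType) n (v : 'cV[R[i]]_(2 ^ n)) :
  \tr (tpow (sigma_x R) n *m (v *m adj v)) = (Xv v)%:C.
Proof.
rewrite tr_rank1.
have E : forall i j : 'I_(2 ^ n), ((i + j)%N == (2 ^ n).-1) = (j == rev_ord i).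
  move=> i j; rewrite -val_eqE /=; have := ltn_ord i; have := ltn_ord j.
  move: (2 ^ n)%N (nat_of_ord i) (nat_of_ord j) => N a b ha hb.
  by apply/eqP/eqP => ?; lia.
under eq_bigr do under eq_bigr do rewrite tpow_sigma E.
under eq_bigr do rewrite (sum1_delta (rev_ord _) (fun j => v j 0 * (v _ 0)^*)).
apply/eqP; rewrite eq_complex /Xv Re_sum Im_sum eqxx /=.
set s := \sum_i _.
have hs : s = - s.
  rewrite {1}/s (reindex_inj rev_ord_inj) /= /s -sumrN; apply: eq_bigr => i _.
  by rewrite rev_ordK Im_swap.
apply/eqP; have : s + s = 0 by rewrite {1}hs addNr.
rewrite -mulr2n -mulr_natr => /eqP. rewrite mulf_eq0 pnatr_eq0 orbF. by move/eqP.
Qed.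

Definition Pv (R : realType) n (v : 'cV[R[i]]_(2 ^ n)) : R := n2c (v (i0 n) 0).
Definition Qv (R : realType) n (v : 'cV[R[i]]_(2 ^ n)) : R := n2c (v (il n) 0).

Lemma objectiveE (R : realType) (alpha : R) n1 n2 (a : 'cV[R[i]]_(2 ^ n1)) (b : 'cV[R[i]]_(2 ^ n2)) :
  objective alpha a b = (alpha * (Pv a * Pv b + Qv a * Qv b) + Xv a * Xv b)%:C.
Proof.
rewrite /objective.
have -> : castmx (expnD_2 n1 n2, expnD_2 n1 n2) (alpha%:C *: MZ R (n1 + n2)%N + MX R (n1 + n2)%N)
  = alpha%:C *: (castmx (expnD_2 n1 n2, expnD_2 n1 n2) (tpow (proj0 R) (n1 + n2)%N)
               + castmx (expnD_2 n1 n2, expnD_2 n1 n2) (tpow (proj1 R) (n1 + n2)%N))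
    + castmx (expnD_2 n1 n2, expnD_2 n1 n2) (tpow (sigma_x R) (n1 + n2)%N).
  by apply/matrixP => k l; rewrite !(castmxE, mxE).
rewrite tpowD_proj0 tpowD_proj1 tpowD_sigma.
rewrite mulmxDl -scalemxAl mulmxDl !tensmx_mul mxtraceD mxtraceZ mxtraceD !trace_tens.
rewrite !trP0 !trP1 !trX.
by rewrite -!rmorphM -!rmorphD -rmorphM -rmorphD.
Qed.

Local Open Scope ring_scope.
Local Open Scope complex_scope.

Definition Nv (R : realType) N (v : 'cV[R[i]]_N) : R := \sum_i n2c (v i 0).

Lemma unit_vecE (R : realType) N (v : 'cV[R[i]]_N) : unit_vec v <-> Nv v = 1.
Proof.
have H : adj v *m v = ((Nv v)%:C)%:M.
  apply/matrixP => x y; rewrite !ord1 !mxE /Nv eqxx mulr1n.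
  rewrite (big_morph (real_complex R) (rmorphD _) (rmorph0 _)).
  by apply: eq_bigr => i _; rewrite !mxE mulrC mulcJ.
rewrite /unit_vec H; split.
  by move/(congr1 (fun M : 'M_1 => M 0 0)); rewrite !mxE eqxx mulr1n => /complexI.
by move=> ->.
Qed.

Lemma n2c_ge0 (R : realType) (z : R[i]) : 0 <= n2c z.
Proof. by rewrite /n2c addr_ge0 // sqr_ge0. Qed.

Lemma i0_neq_il n : (0 < n)%N -> il n != i0 n.
Proof.
move=> hn; rewrite -val_eqE /=; have : (2 <= 2 ^ n)%N.
  by rewrite -{1}(expn1 2) leq_exp2l.
move: (2 ^ n)%N => N; lia.
Qed.

Definition Tv (R : realType) n (v : 'cV[R[i]]_(2 ^ n)) : R :=
  complex.Re (v (il n) 0 * (v (i0 n) 0)^*) + complex.Re (v (i0 n) 0 * (v (il n) 0)^*).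

Definition rest n (i : 'I_(2 ^ n)) := (i != i0 n) && (i != il n).

Lemma X_split (R : realType) n (v : 'cV[R[i]]_(2 ^ n)) : (0 < n)%N ->
  Xv v = Tv v + \sum_(i | rest i) complex.Re (v (rev_ord i) 0 * (v i 0)^*).
Proof.
move=> hn; rewrite /Xv (bigD1 (i0 n)) //= (bigD1 (il n)) /=; last by rewrite i0_neq_il.
by rewrite addrA /Tv /il rev_ordK.
Qed.

Lemma N_split (R : realType) n (v : 'cV[R[i]]_(2 ^ n)) : (0 < n)%N ->
  Nv v = Pv v + Qv v + \sum_(i | rest i) n2c (v i 0).
Proof.
move=> hn; rewrite /Nv (bigD1 (i0 n)) //= (bigD1 (il n)) /=; last by rewrite i0_neq_il.
by rewrite addrA.
Qed.

Lemma Re_bound (R : realType) (x y : R[i]) :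
  `|complex.Re (x * y^*)| <= (n2c x + n2c y) / 2.
Proof.
case: x y => a b [c d]; rewrite /n2c /=.
have h1 := sqr_ge0 (a + c); have h2 := sqr_ge0 (b + d); have h3 := sqr_ge0 (a - c); have h4 := sqr_ge0 (b - d).
rewrite ler_norml; apply/andP; split; lra.
Qed.

Lemma rest_bound (R : realType) n (v : 'cV[R[i]]_(2 ^ n)) :
  `|\sum_(i | rest i) complex.Re (v (rev_ord i) 0 * (v i 0)^*)|
    <= \sum_(i | rest i) n2c (v i 0).
Proof.
apply: le_trans (ler_norm_sum _ _ _) _.
apply: le_trans (ler_sum _ (fun i _ => Re_bound (v (rev_ord i) 0) (v i 0))) _.
rewrite -mulr_suml big_split /=.
have P : forall j : 'I_(2 ^ n), rest (rev_ord j) = rest j.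
  move=> j; rewrite /rest /il (inj_eq (@rev_ord_inj _)) -{1}[i0 n]rev_ordK.
  by rewrite (inj_eq (@rev_ord_inj _)) andbC.
have -> : \sum_(i | rest i) n2c (v (rev_ord i) 0) = \sum_(i | rest i) n2c (v i 0).
  rewrite [RHS](reindex_inj (@rev_ord_inj (2 ^ n))).
  by apply: eq_bigl => j; rewrite P.
lra.
Qed.


Lemma T_bounds (R : realType) n (v : 'cV[R[i]]_(2 ^ n)) :
  Tv v ^+ 2 <= 4 * Pv v * Qv v /\ `|Tv v| <= Pv v + Qv v.
Proof.
rewrite /Tv /Pv /Qv /n2c; case: (v (i0 n) 0) => a b; case: (v (il n) 0) => c d /=.
have h0 := sqr_ge0 (a * d - b * c).
have h1 := sqr_ge0 (a + c); have h2 := sqr_ge0 (b + d); have h3 := sqr_ge0 (a - c); have h4 := sqr_ge0 (b - d).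
split; first lra.
rewrite ler_norml; apply/andP; split; lra.
Qed.

Lemma supp_XN (R : realType) n (v : 'cV[R[i]]_(2 ^ n)) : (0 < n)%N ->
  (forall i, rest i -> v i 0 = 0) -> Xv v = Tv v /\ Nv v = Pv v + Qv v.
Proof.
move=> hn h; rewrite (X_split v hn) (N_split v hn) !big1 ?addr0 //.
  by move=> i /h ->; rewrite /n2c /= expr0n /= addr0.
by move=> i /h ->; rewrite rmorph0 mulr0.
Qed.

Definition mk (R : realType) n (c0 c1 : R[i]) : 'cV[R[i]]_(2 ^ n) :=
  \col_i (if i == i0 n then c0 else if i == il n then c1 else 0).

Lemma mk_i0 (R : realType) n (c0 c1 : R[i]) : mk n c0 c1 (i0 n) 0 = c0.
Proof. by rewrite mxE eqxx. Qed.

Lemma mk_il (R : realType) n (c0 c1 : R[i]) : (0 < n)%N -> mk n c0 c1 (il n) 0 = c1.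
Proof. by move=> hn; rewrite mxE (negbTE (i0_neq_il hn)) eqxx. Qed.

Lemma mk_supp (R : realType) n (c0 c1 : R[i]) i : rest i -> mk n c0 c1 i 0 = 0.
Proof. by case/andP => /negbTE h1 /negbTE h2; rewrite mxE h1 h2. Qed.

Lemma one_supp (R : realType) (v : 'cV[R[i]]_(2 ^ 1)) i : rest i -> v i 0 = 0.
Proof.
case/andP; rewrite -!val_eqE /=; have := ltn_ord i.
move=> hk h1 h2; exfalso; move: hk h1 h2; move: (nat_of_ord i) => k; rewrite expn1; lia.
Qed.

Lemma key_ineq (R : realType) (alpha Pa Qa Xa Pb Qb Xb T E r : R) :
  0 <= alpha -> 0 <= Pa -> 0 <= Qa -> 0 <= Pb -> 0 <= Qb -> 0 <= r ->
  Xb = T + E -> `|E| <= r -> T ^+ 2 <= 4 * Pb * Qb -> `|T| <= Pb + Qb ->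
  alpha * (Pa * Pb + Qa * Qb) + Xa * Xb <=
  alpha * (Pa * (Pb + r / 2) + Qa * (Qb + r / 2))
    + `|Xa| * (2 * (Num.sqrt (Pb + r / 2) * Num.sqrt (Qb + r / 2))).
Proof.
move=> ha hPa hQa hPb hQb hr hX hE hT1 hT2.
apply: lerD.
  apply: ler_wpM2l => //; apply: lerD; apply: ler_wpM2l => //; lra.
apply: le_trans (ler_norm _) _; rewrite normrM; apply: ler_wpM2l => //.
have -> : 2 * (Num.sqrt (Pb + r / 2) * Num.sqrt (Qb + r / 2))
          = Num.sqrt (4 * ((Pb + r / 2) * (Qb + r / 2))).
  rewrite sqrtrM // sqrtrM; last lra.
  have -> : (4 : R) = 2 ^+ 2 by rewrite expr2; lra.
  by rewrite sqrtr_sqr ger0_norm.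
rewrite -sqrtr_sqr; apply: ler_wsqrtr; rewrite hX.
move: hE hT2; rewrite !ler_norml => /andP [hE1 hE2] /andP [hT3 hT4].
have hTE : T * E <= (Pb + Qb) * r by nra.
have hEE : E ^+ 2 <= r ^+ 2 by nra.
rewrite sqrrD; lra.
Qed.

Local Open Scope ring_scope.
Local Open Scope complex_scope.

Lemma incl_A (R : realType) (alpha : R) n1 n2 (hn2 : (0 < n2)%N) x
  (a : 'cV[R[i]]_(2 ^ n1)) (c : 'cV[R[i]]_(2 ^ 1)) :
  unit_vec a -> unit_vec c -> x%:C = objective alpha a c ->
  exists (a : 'cV[R[i]]_(2 ^ n1)) (b : 'cV[R[i]]_(2 ^ n2)),
    unit_vec a /\ unit_vec b /\ x%:C = objective alpha a b.
Proof.
move=> ua uc hx.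
set b := mk n2 (c (i0 1) 0) (c (il 1) 0).
have [Xc Nc] := supp_XN (isT : (0 < 1)%N) (fun i => @one_supp R c i).
have [Xb Nb] := supp_XN hn2 (fun i => @mk_supp R n2 (c (i0 1) 0) (c (il 1) 0) i).
have Pb : Pv b = Pv c by rewrite /Pv mk_i0.
have Qb : Qv b = Qv c by rewrite /Qv mk_il.
have Tb : Tv b = Tv c by rewrite /Tv mk_i0 mk_il.
exists a, b; split => //; split.
  by apply/unit_vecE; rewrite Nb Pb Qb -Nc; apply/unit_vecE.
by rewrite hx !objectiveE Xb Xc Pb Qb Tb.
Qed.

Lemma incl_B (R : realType) (alpha : R) (ha : 0 <= alpha) n1 n2 (hn2 : (0 < n2)%N) x
  (a : 'cV[R[i]]_(2 ^ n1)) (b : 'cV[R[i]]_(2 ^ n2)) :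
  unit_vec a -> unit_vec b -> x%:C = objective alpha a b ->
  exists y, (exists (a : 'cV[R[i]]_(2 ^ n1)) (c : 'cV[R[i]]_(2 ^ 1)),
    unit_vec a /\ unit_vec c /\ y%:C = objective alpha a c) /\ x <= y.
Proof.
move=> ua ub hx.
have hxE : x = alpha * (Pv a * Pv b + Qv a * Qv b) + Xv a * Xv b.
  by apply: complexI; rewrite hx objectiveE.
have hN := N_split b hn2; have Nb1 : Nv b = 1 by apply/unit_vecE.
have hX := X_split b hn2; have hE := rest_bound b.
set r := \sum_(i | rest i) n2c (b i 0) in hN hE.
have hr : 0 <= r by apply: sumr_ge0 => i _; apply: n2c_ge0.
have [hT1 hT2] := T_bounds b.
have hPb := n2c_ge0 (b (i0 n2) 0); have hQb := n2c_ge0 (b (il n2) 0).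
have hP' : 0 <= Pv b + r / 2 by rewrite /Pv; lra.
have hQ' : 0 <= Qv b + r / 2 by rewrite /Qv; lra.
pose s : R := if 0 <= Xv a then 1 else -1.
pose c := mk 1 (Num.sqrt (Pv b + r / 2))%:C (s * Num.sqrt (Qv b + r / 2))%:C.
have [Xc Nc] := supp_XN (isT : (0 < 1)%N) (fun i => @one_supp R c i).
have Pc : Pv c = Pv b + r / 2.
  by rewrite /Pv mk_i0 /n2c /= expr0n /= addr0 sqr_sqrtr.
have Qc : Qv c = Qv b + r / 2.
  rewrite /Qv mk_il // /n2c /= expr0n /= addr0 exprMn sqr_sqrtr //.
  by rewrite /s; case: ifP => _; rewrite ?expr1n ?sqrrN ?expr1n mul1r.
have Tc : Tv c = 2 * s * (Num.sqrt (Pv b + r / 2) * Num.sqrt (Qv b + r / 2)).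
  rewrite /Tv mk_i0 mk_il // /=; ring.
exists (alpha * (Pv a * Pv c + Qv a * Qv c) + Xv a * Xv c); split.
  exists a, c; split => //; split; last by rewrite objectiveE.
  by apply/unit_vecE; rewrite Nc Pc Qc; lra.
rewrite hxE Pc Qc Xc Tc.
have -> : Xv a * (2 * s * (Num.sqrt (Pv b + r / 2) * Num.sqrt (Qv b + r / 2)))
  = `|Xv a| * (2 * (Num.sqrt (Pv b + r / 2) * Num.sqrt (Qv b + r / 2))).
  rewrite /s; case: ifP => h.
    by rewrite ger0_norm //; ring.
  by rewrite ltr0_norm ?ltNge ?h //; ring.
exact: (key_ineq (Xv a) ha (n2c_ge0 (a (i0 n1) 0)) (n2c_ge0 (a (il n1) 0)) hPb hQb hr hX hE hT1 hT2).
Qed.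

Theorem lemma1 (R : realType) (alpha : R) (halpha : 0 < alpha <= 2)
    (n1 n2 : nat) (hn1 : (1 <= n1)%N) (hn2 : (1 <= n2)%N) :
  f alpha n1 n2 = f alpha n1 1.
Proof.
have ha : 0 <= alpha by case/andP: halpha => /ltW.
rewrite /f -[LHS]sup_down -[RHS]sup_down; congr sup.
apply/seteqP; split => x [y [Hy le]].
  case: Hy => a [b [ua [ub hy]]].
  have [z [Hz le2]] := incl_B ha hn2 ua ub hy.
  by exists z; split => //; exact: le_trans le le2.
case: Hy => a [c [ua [uc hy]]].
exists y; split => //; rewrite /=; exact: (incl_A hn2 ua uc hy).
Qed.
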